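(* Let $n=mp$, where $m$ is a positive integer and $p$ is a prime with $\gcd(m,p)=1$. Let $s,t$ be positive integers with $st=p-1$, and let $g$ be a generator of $\mathbb{Z}_p^\times$. Let $e$ be an integer satisfying $$e\equiv 1\pmod m,\qquad e\equiv g^t\pmod p,$$ and let $G=\langle e\rangle$ be the subgroup of $\mathbb{Z}_n^\times$ generated by $e$. Then the coset index function $f_G$ is an $(mp,\ m(1+t),\ \{0,m(s-1)\})$ zero-difference function.
   Context: For a subgroup $G$ of $\mathbb{Z}_n^\times$ and $r\in\mathbb{Z}_n$, the coset $rG=\{rg\mid g\in G\}$; these cosets partition $\mathbb{Z}_n$, forming a set $D_G$. The coset index function induced by $G$ is $f_G:\mathbb{Z}_n\to\mathbb{Z}_{|D_G|}$, $f_G(x)=h_G(C_x)$, where $C_x$ is the coset containing $x$ and $h_G:D_G\to\mathbb{Z}_{|D_G|}$ is a fixed bijection. A function $f:A\to B$ between finite abelian groups is an $(n,m,S)$ zero-difference function if $n=|A|$, $m=|f(A)|$, and for every nonzero $a\in A$, $|\{x\in A\mid f(x+a)=f(x)\}|\in S$. Here $A=(\mathbb{Z}_n,+)$. *)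

(* Defs.v *)
From HB Require Import structures.
From mathcomp Require Import all_boot all_order all_algebra all_fingroup.
Set Implicit Arguments. Unset Strict Implicit. Unset Printing Implicit Defensive.
Import GRing.Theory.
Local Open Scope ring_scope.

Definition coset_of (R : finUnitRingType) (G : {set {unit R}}) (r : R) : {set R} :=
  [set r * val u | u in G].

Definition cosets_of (R : finUnitRingType) (G : {set {unit R}}) : {set {set R}} :=
  [set coset_of G r | r : R].

(* The coset index function f_G x = h_G(C_x), where C_x is the coset
   containing x (namely xG, since 1 \in G) and h : D_G -> Z_{|D_G|}. *)
Definition coset_index_fun (R : finUnitRingType) (G : {set {unit R}})
  (h : {set R} -> 'I_#|cosets_of G|) (x : R) : 'I_#|cosets_of G| :=
  h (coset_of G x).

Definition bij_on_cosets (R : finUnitRingType) (G : {set {unit R}})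
  (h : {set R} -> 'I_#|cosets_of G|) : Prop :=
  {in cosets_of G &, injective h} /\
  (forall y, exists2 C, C \in cosets_of G & h C = y).

Definition zero_difference_fun (A : finZmodType) (B : finType) (f : A -> B)
  (n m : nat) (S : seq nat) : Prop :=
  [/\ #|A| = n, #|f @: A| = m &
      forall a : A, a != 0 -> #|[set x : A | f (x + a) == f x]| \in S].

(* Main.v *)
Require Import Defs.
From mathcomp Require Import all_boot all_order all_algebra all_fingroup all_solvable.
Import GRing.Theory.
Local Open Scope ring_scope.

Section Cosets.
Variable R : finUnitRingType.
Variable G : {group {unit R}}.

Lemma coset_memP x y :
  reflect (exists2 v, v \in G & y = x * val v) (y \in Defs.coset_of G x).
Proof. by apply: (iffP imsetP) => -[v Hv ->]; exists v. Qed.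

Lemma coset_self x : x \in Defs.coset_of G x.
Proof. by apply/coset_memP; exists 1%g; rewrite ?group1 // FinRing.val_unit1 mulr1. Qed.

Lemma coset_sub x y : y \in Defs.coset_of G x -> Defs.coset_of G y \subset Defs.coset_of G x.
Proof.
case/coset_memP => v Hv -> ; apply/subsetP => z /coset_memP [w Hw ->].
by apply/coset_memP; exists (v * w)%g; rewrite ?groupM // FinRing.val_unitM mulrA.
Qed.

Lemma coset_sym x y : y \in Defs.coset_of G x -> x \in Defs.coset_of G y.
Proof.
case/coset_memP => v Hv ->; apply/coset_memP; exists (v^-1)%g; rewrite ?groupV //.
by rewrite FinRing.val_unitV -mulrA mulrV ?mulr1 // (valP v).
Qed.

Lemma coset_eq x y : y \in Defs.coset_of G x -> Defs.coset_of G y = Defs.coset_of G x.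
Proof.
move=> H; apply/eqP; rewrite eqEsubset coset_sub //=.
by apply: coset_sub; apply: coset_sym.
Qed.

Lemma coset_eqE x y : (Defs.coset_of G y == Defs.coset_of G x) = (y \in Defs.coset_of G x).
Proof.
apply/eqP/idP => [<-|]; first exact: coset_self.
exact: coset_eq.
Qed.

Lemma cosets_part : partition (cosets_of G) setT.
Proof.
have -> : cosets_of G = preim_partition (Defs.coset_of G) setT.
  rewrite /preim_partition /equivalence_partition /cosets_of.
  apply/setP => C; apply/imsetP/imsetP => -[x _ ->]; exists x => //.
    by apply/setP => y; rewrite !inE eq_sym coset_eqE.
  by apply/setP => y; rewrite !inE eq_sym coset_eqE.
exact: preim_partitionP.
Qed.

Lemma cosets_card_sum : #|R| = (\sum_(C in cosets_of G) #|C|)%N.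
Proof. by rewrite -cardsT (card_partition cosets_part). Qed.

End Cosets.
Arguments coset_eq {R G x y}.
Arguments coset_self {R G x}.
Arguments coset_memP {R G x y}.
Section Zn.
Variables m p : nat.
Hypothesis Hm : (0 < m)%N.
Hypothesis Hp : prime p.
Hypothesis Hcop : coprime m p.

Local Notation N := (m * p)%N.
Local Notation ZN := 'Z_(m * p).

Lemma p_gt1 : (1 < p)%N. Proof. exact: prime_gt1. Qed.
Lemma N_gt1 : (1 < N)%N.
Proof. exact: leq_trans p_gt1 (leq_pmull _ Hm). Qed.
Lemma m_ltN : (m < N)%N.
Proof. by rewrite -{1}[m]muln1 ltn_pmul2l // p_gt1. Qed.

Definition pi (x : ZN) : 'Z_p := (val x)%:R.

Lemma ZN_nat (x : ZN) : (val x)%:R = x.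
Proof. by rewrite natr_Zp. Qed.

Lemma val_ZN_nat k : val (k%:R : ZN) = (k %% N)%N.
Proof. by rewrite [LHS](val_Zp_nat N_gt1). Qed.

Lemma val_Zp_natp k : val (k%:R : 'Z_p) = (k %% p)%N.
Proof. by rewrite [LHS](val_Zp_nat p_gt1). Qed.

Lemma pi_nat k : pi k%:R = k%:R.
Proof.
apply: val_inj; rewrite /pi /= !val_Zp_natp val_ZN_nat.
by rewrite modn_dvdm // dvdn_mull.
Qed.

Lemma piD x y : pi (x + y) = pi x + pi y.
Proof. by rewrite -{1}(ZN_nat x) -{1}(ZN_nat y) -natrD pi_nat natrD. Qed.

Lemma piM x y : pi (x * y) = pi x * pi y.
Proof. by rewrite -{1}(ZN_nat x) -{1}(ZN_nat y) -natrM pi_nat natrM. Qed.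

Lemma pi0 : pi 0 = 0.
Proof. by rewrite -(mulr0n 1) pi_nat. Qed.

Lemma pi1 : pi 1 = 1.
Proof. by rewrite -(mulr1n 1) pi_nat. Qed.

Lemma piN x : pi (- x) = - pi x.
Proof. by apply/eqP; rewrite -subr_eq0 opprK -piD addNr pi0. Qed.

Lemma piB x y : pi (x - y) = pi x - pi y.
Proof. by rewrite piD piN. Qed.

Lemma piX x k : pi (x ^+ k) = pi x ^+ k.
Proof. by elim: k => [|k IH]; rewrite ?expr0 ?pi1 // !exprS piM IH. Qed.

Lemma pi_int (e : int) : pi e%:~R = e%:~R.
Proof. by case: e => k; rewrite ?NegzE ?mulrNz ?piN pi_nat. Qed.

Definition Mm (z : ZN) := exists w, z = m%:R * w.

Lemma MmD z1 z2 : Mm z1 -> Mm z2 -> Mm (z1 + z2).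
Proof. by move=> [w1 ->] [w2 ->]; exists (w1 + w2); rewrite mulrDr. Qed.

Lemma MmM x z : Mm z -> Mm (x * z).
Proof. by move=> [w ->]; exists (x * w); rewrite mulrCA. Qed.

Lemma MmN z : Mm z -> Mm (- z).
Proof. by move=> [w ->]; exists (- w); rewrite mulrN. Qed.

Lemma Mm_dvd z : Mm z -> (m %| val z)%N.
Proof.
move=> [w ->]; rewrite -(ZN_nat w) -natrM val_ZN_nat.
by rewrite /dvdn modn_dvdm ?dvdn_mulr // -/(dvdn m _) dvdn_mulr.
Qed.

Lemma dvd_Mm z : (m %| val z)%N -> Mm z.
Proof.
move=> /divnK Hz; exists (val z %/ m)%:R.
rewrite -natrM; have -> : (m * (val z %/ m))%N = val z by rewrite mulnC.
by rewrite ZN_nat.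
Qed.

Lemma Mm_pi0 z : Mm z -> pi z = 0 -> z = 0.
Proof.
move=> [w ->]; rewrite -(ZN_nat w) -natrM => /(congr1 val).
rewrite /pi val_Zp_natp val_ZN_nat modn_dvdm ?dvdn_mull //= => /eqP.
rewrite -/(dvdn p _) Gauss_dvdr; last by rewrite coprime_sym.
move=> Hpw; apply: val_inj; rewrite /= val_ZN_nat.
by apply/eqP; rewrite -/(dvdn _ _) dvdn_pmul2l.
Qed.

Lemma Mm_eq z1 z2 : Mm (z1 - z2) -> pi z1 = pi z2 -> z1 = z2.
Proof.
move=> H Hpi; apply/eqP; rewrite -subr_eq0; apply/eqP/Mm_pi0 => //.
by rewrite piB Hpi subrr.
Qed.

Lemma Zp_unit_neq0 (z : 'Z_p) : z != 0 -> z \is a GRing.unit.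
Proof.
move=> Hz; rewrite -(natr_Zp z) unitZpE ?p_gt1 // prime_coprime //.
apply/negP => /dvdn_leq H.
have Hlt : (val z < p)%N by rewrite -[X in (_ < X)%N](Zp_cast p_gt1) ltn_ord.
have : (0 < val z)%N by rewrite lt0n; apply: contra Hz => /eqP H0; apply/eqP/val_inj.
by move=> /H; rewrite leqNgt Hlt.
Qed.


Definition fqr (z : 'I_m * 'Z_p) : ZN := (z.1 * p + val z.2)%:R.

Lemma card_Zp_p : #|'Z_p| = p.
Proof. by rewrite card_ord Zp_cast // p_gt1. Qed.

Lemma card_ZN : #|ZN| = N.
Proof. by rewrite card_ord Zp_cast // N_gt1. Qed.

Lemma val_Zp_lt (r : 'Z_p) : (val r < p)%N.
Proof. by rewrite -[X in (_ < X)%N](Zp_cast p_gt1) ltn_ord. Qed.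

Lemma fqr_lt (z : 'I_m * 'Z_p) : (z.1 * p + val z.2 < N)%N.
Proof.
case: z => [q r] /=.
apply: (@leq_trans (q * p + p)); first by rewrite ltn_add2l val_Zp_lt.
by rewrite -mulSnr leq_mul2r ltn_ord orbT.
Qed.

Lemma fqr_inj : injective fqr.
Proof.
move=> [q1 r1] [q2 r2] /(congr1 val); rewrite /fqr !val_ZN_nat.
rewrite !modn_small ?(fqr_lt (q1, r1)) ?(fqr_lt (q2, r2)) //= => H.
have Hq : q1 = q2 :> nat.
  by move: (congr1 (divn^~ p) H); rewrite !divnMDl ?prime_gt0 // !divn_small ?val_Zp_lt // !addn0.
have Hr : val r1 = val r2.
  by move: (congr1 (modn^~ p) H); rewrite !modnMDl !modn_small ?val_Zp_lt.
by congr pair; apply: val_inj.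
Qed.

Lemma pi_fqr z : pi (fqr z) = z.2.
Proof.
rewrite /fqr pi_nat; apply: val_inj; rewrite /= val_Zp_natp modnMDl modn_small //.
exact: val_Zp_lt.
Qed.

Lemma fqr_surj x : exists z, x = fqr z.
Proof.
have : x \in fqr @: setT.
  have -> : fqr @: setT = setT; last by rewrite inE.
  apply/eqP; rewrite eqEcard subsetT /= cardsT card_ZN card_in_imset.
    by rewrite cardsT card_prod card_ord card_Zp_p.
  by move=> a b _ _; apply: fqr_inj.
by case/imsetP => z _ ->; exists z.
Qed.

Lemma count_pi (Q : pred 'Z_p) :
  #|[set x : ZN | Q (pi x)]| = (m * #|[set b | Q b]|)%N.
Proof.
have -> : [set x : ZN | Q (pi x)] = fqr @: [set z | Q z.2].
  apply/setP => x; rewrite inE; apply/idP/imsetP.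
    by case: (fqr_surj x) => z ->; rewrite pi_fqr => Hz; exists z; rewrite ?inE.
  by case=> z; rewrite inE => Hz ->; rewrite pi_fqr.
rewrite card_in_imset; last by move=> a b _ _; apply: fqr_inj.
have -> : [set z : 'I_m * 'Z_p | Q z.2] = setX [set: 'I_m] [set b | Q b].
  by apply/setP => -[q r]; rewrite !inE.
by rewrite cardsX cardsT card_ord.
Qed.


Local Notation coset := (Defs.coset_of (R := ZN)).

Variable cu : {unit 'Z_p}.
Variables s : nat.
Hypothesis Hs : (0 < s)%N.
Hypothesis Hcu : #[cu]%g = s.
Variable u : {unit ZN}.
Hypothesis HE : Mm (val u - 1).
Hypothesis Hpiu : pi (val u) = val cu.

Local Notation G := (<[u]>%G).

Lemma MmX k : Mm (val u ^+ k - 1).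
Proof.
elim: k => [|k IH]; first by exists 0; rewrite expr0 subrr mulr0.
have -> : val u ^+ k.+1 - 1 = val u ^+ k * (val u - 1) + (val u ^+ k - 1).
  by rewrite mulrBr mulr1 -exprSr addrA subrK.
by apply: MmD => //; apply: MmM.
Qed.

Lemma piX_u k : pi (val (u ^+ k)%g) = val cu ^+ k.
Proof. by rewrite FinRing.val_unitX piX Hpiu. Qed.

Lemma u_cu k : ((u ^+ k)%g == 1%g) = ((cu ^+ k)%g == 1%g).
Proof.
apply/eqP/eqP => H.
  apply: val_inj; rewrite FinRing.val_unitX FinRing.val_unit1 -Hpiu -piX.
  by rewrite -FinRing.val_unitX H FinRing.val_unit1 pi1.
apply: val_inj; rewrite FinRing.val_unitX FinRing.val_unit1; apply: Mm_eq.
  exact: MmX.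
by rewrite piX Hpiu -FinRing.val_unitX H FinRing.val_unit1 pi1.
Qed.

Lemma order_u : #[u]%g = s.
Proof.
rewrite -Hcu; apply/eqP; rewrite eqn_dvd !order_dvdn u_cu expg_order.
by rewrite -u_cu expg_order.
Qed.

Lemma G_Mm v : v \in G -> Mm (val v - 1).
Proof. by case/cycleP => k ->; rewrite FinRing.val_unitX; apply: MmX. Qed.

Lemma coset_pi0 x : pi x = 0 -> coset G x = [set x].
Proof.
move=> Hx; apply/setP => y; rewrite inE; apply/coset_memP/eqP => [[v Hv ->]|->].
  apply: Mm_eq; first by rewrite -{2}(mulr1 x) -mulrBr; apply/MmM/G_Mm.
  by rewrite piM Hx mul0r.
by exists 1%g; rewrite ?group1 // FinRing.val_unit1 mulr1.
Qed.

Lemma card_coset x : pi x != 0 -> #|coset G x| = s.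
Proof.
move=> Hx; rewrite /Defs.coset_of card_in_imset; first by rewrite -order_u.
move=> v w Hv Hw /= H; apply: val_inj; apply: Mm_eq.
  have -> : val v - val w = (val v - 1) - (val w - 1) by rewrite opprB addrA subrK.
  by apply: MmD; [apply: G_Mm | apply/MmN/G_Mm].
move: (mulrI (Zp_unit_neq0 _ Hx)) => Hi; apply: Hi; by rewrite -!piM H.
Qed.

Lemma G_elems v : v \in G -> exists k : 'I_s, v = (u ^+ k)%g.
Proof.
case/cycleP => i ->; have Hlt : (i %% s < s)%N by rewrite ltn_pmod.
by exists (Ordinal Hlt); rewrite /= -order_u expg_mod_order.
Qed.

Lemma G_u (k : nat) : (u ^+ k)%g \in G.
Proof. by rewrite mem_cycle. Qed.

Lemma ZD_empty (a x : ZN) : ~~ (m %| val a)%N -> x + a \notin coset G x.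
Proof.
move=> Ha; apply/negP => /coset_memP [v Hv] H; move: Ha; apply/negP/negPn.
have -> : a = x * (val v - 1) by rewrite mulrBr mulr1 -H addrC addKr.
by apply/Mm_dvd/MmM/G_Mm.
Qed.

Definition Qa (a : ZN) (b : 'Z_p) := [exists k : 'I_s, pi a == b * (val cu ^+ k - 1)].

Lemma ZD_set (a : ZN) : (m %| val a)%N ->
  [set x | x + a \in coset G x] = [set x | Qa a (pi x)].
Proof.
move=> /dvd_Mm Ha; apply/setP => x; rewrite !inE; apply/coset_memP/existsP.
  case=> v /G_elems [k ->] H; exists k; apply/eqP.
  by rewrite mulrBr mulr1 -piX_u -piM -H piD addrC addKr.
case=> k /eqP H; exists (u ^+ k)%g; first exact: G_u.
apply: Mm_eq.
  have -> : x + a - x * val (u ^+ k)%g = a - x * (val (u ^+ k)%g - 1).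
    by rewrite mulrBr mulr1 opprB addrA (addrC a x).
  apply: MmD => //; apply/MmN/MmM; rewrite FinRing.val_unitX; exact: MmX.
by rewrite piD piM piX_u H mulrBr mulr1 addrC subrK.
Qed.

Lemma cu_inj (k1 k2 : 'I_s) : val cu ^+ k1 = val cu ^+ k2 -> k1 = k2.
Proof.
rewrite -!FinRing.val_unitX => /val_inj /eqP; rewrite eq_expg_mod_order Hcu.
by rewrite !modn_small // => /eqP H; apply: val_inj.
Qed.

Lemma cu_neq1 (k : 'I_s) : val k != 0%N -> val cu ^+ k - 1 != 0.
Proof.
move=> Hk; rewrite subr_eq0; apply/eqP => H.
have H0 : (0 < s)%N by [].
have := @cu_inj k (Ordinal H0); rewrite /= expr0 => /(_ H) Hk0.
by move: Hk; rewrite Hk0.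
Qed.

Lemma card_Qa (a : ZN) : pi a != 0 -> #|[set b | Qa a b]| = s.-1.
Proof.
move=> Ha.
have -> : [set b | Qa a b] =
   (fun k : 'I_s => pi a / (val cu ^+ k - 1)) @: [set k : 'I_s | val k != 0%N].
  apply/setP => b; rewrite inE; apply/existsP/imsetP.
    case=> k /eqP H.
    have Hk : val k != 0%N.
      by apply: contra Ha => /eqP Hk0; rewrite H Hk0 expr0 subrr mulr0.
    exists k; first by rewrite inE.
    by rewrite H mulrK // Zp_unit_neq0 // cu_neq1.
  case=> k; rewrite inE => Hk ->; exists k.
  by rewrite divrK // Zp_unit_neq0 // cu_neq1.
rewrite card_in_imset.
  case: s Hs Hcu cu_inj => // s' _ _ _.
  have -> : [set k : 'I_s'.+1 | val k != 0%N] = [set~ ord0].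
    by apply/setP => k; rewrite !inE.
  by rewrite cardsC1 card_ord.
move=> k1 k2; rewrite !inE => Hk1 Hk2 H.
have Hd : val cu ^+ k1 - 1 = val cu ^+ k2 - 1.
  by apply: invr_inj; apply: (mulrI (Zp_unit_neq0 _ Ha)); exact: H.
by apply: cu_inj; apply: (addIr _ Hd).
Qed.

Variable t : nat.
Hypothesis Hst : (s * t)%N = p.-1.

Lemma cosets_mem C : C \in cosets_of G -> exists x, C = coset G x.
Proof. by case/imsetP => x _ ->; exists x. Qed.

Lemma card_cosets : #|cosets_of G| = (m * (1 + t))%N.
Proof.
pose ZS := [set C : {set ZN} | [exists x in C, pi x == 0]].
have Hsum := @cosets_card_sum ZN G.
rewrite (big_setID ZS) /= in Hsum.
rewrite (eq_bigr (fun _ => 1%N)) in Hsum; last first.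
  move=> C; rewrite !inE => /andP [/cosets_mem [y Hy] /existsP [x /andP [Hx /eqP Hx0]]].
  by rewrite Hy in Hx *; rewrite -(coset_eq Hx) coset_pi0 // cards1.
rewrite [X in (_ + X)%N](eq_bigr (fun _ => s)) in Hsum; last first.
  move=> C; rewrite !inE => /andP [HZ /cosets_mem [y Hy]].
  rewrite Hy card_coset //; apply: contra HZ => Hy0.
  by apply/existsP; exists y; rewrite Hy coset_self.
rewrite !sum_nat_const muln1 card_ZN in Hsum.
have H1 : #|cosets_of G :&: ZS| = m.
  have -> : cosets_of G :&: ZS = (coset G) @: [set x : ZN | pi x == 0].
    apply/setP => C; rewrite !inE; apply/andP/imsetP.
      case=> /cosets_mem [y ->] /existsP [x /andP [Hx Hx0]].
      by exists x; rewrite ?inE // (coset_eq Hx).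
    case=> x; rewrite inE => Hx0 ->; split; first by apply/imsetP; exists x.
    by apply/existsP; exists x; rewrite coset_self.
  rewrite card_in_imset.
    rewrite (count_pi (fun b => b == 0)).
    have -> : [set b : 'Z_p | b == 0] = [set 0] by apply/setP => b; rewrite !inE.
    by rewrite cards1 muln1.
  move=> x y; rewrite !inE => /eqP Hx /eqP Hy; rewrite !coset_pi0 //.
  exact: set1_inj.
rewrite H1 in Hsum.
have Hp1 : p = (s * t).+1 by rewrite Hst prednK ?prime_gt0.
rewrite -(cardsID ZS (cosets_of G)) H1 mulnDr muln1; congr addn.
move: Hsum; move: (#|_ :\: ZS|) => D; rewrite Hp1 mulnS => /eqP; rewrite eqn_add2l mulnA (mulnC m s) -mulnA mulnC.
by rewrite eqn_pmul2r // => /eqP ->.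
Qed.

Lemma main_zd (h : {set ZN} -> 'I_#|cosets_of G|) :
  bij_on_cosets h ->
  zero_difference_fun (coset_index_fun h) N (m * (1 + t)) [:: 0%N; (m * (s - 1))%N].
Proof.
case=> Hinj _; split.
- exact: card_ZN.
- have -> : [set coset_index_fun h x | x in ZN] = h @: cosets_of G.
    apply/setP => y; apply/imsetP/imsetP => -[x Hx ->].
      by exists (coset G x) => //; apply/imsetP; exists x.
    by case/imsetP: Hx => z _ ->; exists z.
  by rewrite card_in_imset // card_cosets.
- move=> a Ha.
  have -> : [set x : ZN | coset_index_fun h (x + a) == coset_index_fun h x] =
            [set x | x + a \in coset G x].
    apply/setP => x; rewrite !inE /coset_index_fun -coset_eqE.
    apply/eqP/eqP => [H|->] //; apply: Hinj => //; apply/imsetP.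
      by exists (x + a).
    by exists x.
  have [Hd|Hd] := boolP (m %| val a)%N.
    rewrite ZD_set // count_pi card_Qa ?subn1 ?inE ?eqxx ?orbT //.
    by apply: contra Ha => /eqP H0; apply/eqP/Mm_pi0 => //; apply: dvd_Mm.
  have -> : [set x | x + a \in coset G x] = set0.
    by apply/setP => x; rewrite !inE; apply/negbTE/ZD_empty.
  by rewrite cards0 inE.
Qed.

End Zn.

Theorem theorem3p9 (m p s t : nat) (g : {unit 'Z_p}) (e : int)
  (u : {unit 'Z_(m * p)}) (h : {set 'Z_(m * p)} -> 'I_#|cosets_of <[u]>%g|) :
  (0 < m)%N -> prime p -> coprime m p ->
  (0 < s)%N -> (0 < t)%N -> (s * t)%N = p.-1 ->
  <[g]>%g = [set: {unit 'Z_p}] ->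
  (e = 1 %[mod (m : int)])%Z ->
  (e%:~R = val g ^+ t :> 'Z_p) ->
  val u = e%:~R ->
  bij_on_cosets h ->
  zero_difference_fun (coset_index_fun h) (m * p) (m * (1 + t)) [:: 0%N; (m * (s - 1))%N].
Proof.
move=> Hm Hp Hcop Hs Ht Hst Hg He Hec Hu Hh.
have Hog : #[g]%g = p.-1.
  by rewrite /order Hg -/(units_Zp p) card_units_Zp ?prime_gt0 // totient_prime.
have Hcu : #[(g ^+ t)%g]%g = s.
  by rewrite orderXgcd Hog -Hst gcdnC gcdnMl mulnK.
apply: (@main_zd m p Hm Hp Hcop (g ^+ t)%g s Hs Hcu u _ _ t Hst h Hh).
- move/eqP: He; rewrite eqz_mod_dvd => /dvdzP [q Hq].
  exists q%:~R; rewrite Hu.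
  have : ((e - 1)%:~R : 'Z_(m * p)) = (q * m)%:~R by rewrite Hq.
  by rewrite intrM mulrzBr mulrC.
- by rewrite Hu pi_int // Hec (FinRing.val_unitX t g).
Qed.
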